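(* Let $\mathbb{C}$ be a category of interest and $A\in\mathbb{C}$. If $A$ has an actor in $\mathbb{C}$, then $\mathfrak{B}(A)=\mathrm{Actor}(A)$ (i.e. $\mathfrak{B}(A)$ is isomorphic to $\mathrm{Actor}(A)$, via the homomorphism sending an element $c$ of $\mathrm{Actor}(A)$ to the family of maps $a\mapsto c\cdot a$, $a\mapsto c*a$).
   Context: Category of interest. A category of groups with operations is a variety of universal algebras with a set of operations $\Omega=\Omega_0\cup\Omega_1\cup\Omega_2$ ($\Omega_i$ = set of $i$-ary operations) and a set of identities $\mathbb{E}$ such that: $\mathbb{E}$ contains the group laws; the group operations, written additively $0,-,+$ (addition not necessarily commutative), lie in $\Omega_0,\Omega_1,\Omega_2$ respectively, and $\Omega_0=\{0\}$; putting $\Omega_2'=\Omega_2\setminus\{+\}$ and $\Omega_1'=\Omega_1\setminus\{-\}$, whenever $*\in\Omega_2'$ also $*^\circ\in\Omega_2'$, where $x*^\circ y=y*x$; $\mathbb{E}$ contains $x*(y+z)=x*y+x*z$ for each $*\in\Omega_2'$, and $\omega(x+y)=\omega(x)+\omega(y)$, $\omega(x)*y=\omega(x*y)$ for each $\omega\in\Omega_1'$, $*\in\Omega_2'$. A category of interest $\mathbb{C}=(\Omega,\mathbb{E})$ is such a variety which also satisfies: (Axiom 1) $x_1+(x_2*x_3)=(x_2*x_3)+x_1$ for each $*\in\Omega_2'$; (Axiom 2) for each ordered pair $( *,\bar* )\in\Omega_2'\times\Omega_2'$ there is a word $W$ with $(x_1*x_2)\bar*x_3=W\big(x_1(x_2x_3),x_1(x_3x_2),(x_2x_3)x_1,(x_3x_2)x_1,x_2(x_1x_3),x_2(x_3x_1),(x_1x_3)x_2,(x_3x_1)x_2\big)$,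 each juxtaposition standing for some operation in $\Omega_2'$; the right-hand side is denoted $W(x_1,x_2;x_3;*,\bar* )$. Let $\mathbb{E}_G\subseteq\mathbb{E}$ consist of the group laws together with the identities $x*(y+z)=x*y+x*z$, $\omega(x+y)=\omega(x)+\omega(y)$, $\omega(x)*y=\omega(x*y)$, and let $\mathbb{C}_G$ be the variety $(\Omega,\mathbb{E}_G)$. Actions. For objects $A,B$ of $\mathbb{C}$, a split extension $0\to A\to E\xrightarrow{p}B\to 0$ in $\mathbb{C}$ ($p$ surjective with kernel $A$, and a morphism $s$ with $ps=1_B$) induces actions $b\cdot a=s(b)+a-s(b)$ and $b*a=s(b)*a$ ($*\in\Omega_2'$); these are the derived actions of $B$ on $A$ in $\mathbb{C}$ (one writes $a*b:=b*^\circ a$). Crossed modules and actors. A crossed module in $\mathbb{C}$ is a morphism $\partial:C_1\to C_0$ in $\mathbb{C}$ together with a derived action of $C_0$ on $C_1$ in $\mathbb{C}$ such that for all $r\in C_0$, $c,c'\in C_1$, $*\in\Omega_2'$: $\partial(r\cdot c)=r+\partial(c)-r$; $\partial(c)\cdot c'=c+c'-c$; $\partial(c)*c'=c*c'$; $\partial(r*c)=r*\partial(c)$ and $\partial(c*r)=\partial(c)*r$. For $A\in\mathbb{C}$, an actor of $A$ is a crossed module $\partial:A\to\mathrm{Actor}(A)$ in $\mathbb{C}$ such that for every $C\in\mathbb{C}$ and every derived action of $C$ on $A$ in $\mathbb{C}$ there is a unique morphism $\varphi:C\to\mathrm{Actor}(A)$ in $\mathbb{C}$ with $c\cdot a=\varphi(c)\cdot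 a$ and $c*a=\varphi(c)*a$ for all $c\in C$, $a\in A$, $*\in\Omega_2'$. The object $\mathfrak{B}(A)$. Fix $A\in\mathbb{C}$ and let $(B_j)_{j\in J}$ range over all objects of $\mathbb{C}$ equipped with a derived action on $A$ in $\mathbb{C}$ (one index for each split extension of $A$ in $\mathbb{C}$). Consider families $x$ of maps $A\to A$ consisting of a map $a\mapsto x\cdot a$ and maps $a\mapsto x*a$ ($*\in\Omega_2'$). For $b\in B_j$ let $\mathbf{b}$ be the family $a\mapsto b\cdot a$, $a\mapsto b*a$, and let $\mathbb{B}$ be the set of all such $\mathbf b$. Operations on families: for $\mathbf{b}_i,\mathbf{b}_k\in\mathbb{B}$ and $*\in\Omega_2'$, $(\mathbf b_i*\mathbf b_k)\cdot a=a$ and $(\mathbf b_i*\mathbf b_k)\bar*a=W(b_i,b_k;a;*,\bar* )$ for $\bar*\in\Omega_2'$ (the Axiom 2 word evaluated through the given actions), iterated products being defined inductively in the same way via Axiom 2; $(x+y)\cdot a=x\cdot(y\cdot a)$ and $(x+y)*a=x*a+y*a$; for $\omega\in\Omega_1'$, $\omega(\mathbf b_k)$ is the family of $\omega(b_k)$, $\omega(x*y)=\omega(x)*y$, and $\omega$ is additive; $(-\mathbf b_k)\cdot a=(-b_k)\cdot a$, $(-x)*a=-(x*a)$, $(-x)\cdot a=a$ when $x$ is a product, and $-(x_1+\dots+x_n)=-x_n-\dots-x_1$. $\mathfrak{B}(A)$ is the set of all families obtained from $\mathbb{B}$ by iterating these operations, modulo the equivalence $x\sim y$ iff $x\cdot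 a=y\cdot a$, $x*a=y*a$ and $(\omega_1\cdots\omega_n x)\cdot a=(\omega_1\cdots\omega_n y)\cdot a$ for all $a\in A$, $*\in\Omega_2'$, $n\ge1$, $\omega_1,\dots,\omega_n\in\Omega_1'$; it is an $\Omega$-algebra. *)

(* Defs.v *)
From Stdlib Require Import List Bool.
Import ListNotations.
Set Implicit Arguments.
Unset Strict Implicit.

(* Signatures.  An Omega-algebra has the group operations 0, -, + plus
   unary operations indexed by O1 (= Omega_1') and binary operations
   indexed by O2 (= Omega_2').  Omega_0 = {0}.                          *)

Inductive term (O1 O2 : Type) : Type :=
| tVar  : nat -> term O1 O2
| tZero : term O1 O2
| tOpp  : term O1 O2 -> term O1 O2
| tAdd  : term O1 O2 -> term O1 O2 -> term O1 O2
| tUn   : O1 -> term O1 O2 -> term O1 O2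
| tBin  : O2 -> term O1 O2 -> term O1 O2 -> term O1 O2.

Record alg (O1 O2 : Type) : Type := Alg {
  car :> Type;
  zero : car;
  opp : car -> car;
  add : car -> car -> car;
  un : O1 -> car -> car;
  bin : O2 -> car -> car -> car }.

Arguments zero {O1 O2} a.
Arguments opp {O1 O2} {a} _.
Arguments add {O1 O2} {a} _ _.
Arguments un {O1 O2} {a} _ _.
Arguments bin {O1 O2} {a} _ _ _.

Fixpoint teval (O1 O2 : Type) (X : alg O1 O2) (v : nat -> X) (t : term O1 O2) : X :=
  match t with
  | tVar _ _ n => v n
  | tZero _ _ => zero X
  | tOpp t1 => opp (teval v t1)
  | tAdd t1 t2 => add (teval v t1) (teval v t2)
  | tUn w t1 => un w (teval v t1)
  | tBin o t1 t2 => bin o (teval v t1) (teval v t2)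
  end.

(* The eight products appearing in Axiom 2, with x1, x2, x3:
   x1(x2x3), x1(x3x2), (x2x3)x1, (x3x2)x1, x2(x1x3), x2(x3x1), (x1x3)x2, (x3x1)x2 *)
Inductive shape : Type :=
| S_1_23 | S_1_32 | S_23_1 | S_32_1 | S_2_13 | S_2_31 | S_13_2 | S_31_2.

(* Group words in those products; an atom [wAtom sh o o'] is the product of
   shape [sh] whose outer juxtaposition is the operation [o] and whose inner
   juxtaposition is the operation [o']. *)
Inductive word (O2 : Type) : Type :=
| wAtom : shape -> O2 -> O2 -> word O2
| wZero : word O2
| wOpp  : word O2 -> word O2
| wAdd  : word O2 -> word O2 -> word O2.

Fixpoint weval (O2 : Type) (X : Type) (z : X) (op : X -> X) (ad : X -> X -> X)
  (g : shape -> O2 -> O2 -> X) (w : word O2) : X :=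
  match w with
  | wAtom sh o o' => g sh o o'
  | wZero _ => z
  | wOpp w1 => op (weval z op ad g w1)
  | wAdd w1 w2 => ad (weval z op ad g w1) (weval z op ad g w2)
  end.

Definition atom_alg (O1 O2 : Type) (X : alg O1 O2) (x1 x2 x3 : X)
  (sh : shape) (o o' : O2) : X :=
  match sh with
  | S_1_23 => bin o x1 (bin o' x2 x3)
  | S_1_32 => bin o x1 (bin o' x3 x2)
  | S_23_1 => bin o (bin o' x2 x3) x1
  | S_32_1 => bin o (bin o' x3 x2) x1
  | S_2_13 => bin o x2 (bin o' x1 x3)
  | S_2_31 => bin o x2 (bin o' x3 x1)
  | S_13_2 => bin o (bin o' x1 x3) x2
  | S_31_2 => bin o (bin o' x3 x1) x2
  end.

(* A (candidate) category of interest: the signature, the set of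
   identities E, the involution * |-> *^o on Omega_2', and the chosen
   Axiom-2 word W(x1,x2;x3;o,obar) for every ordered pair (o, obar) of binary operations. *)
Record coi : Type := CoI {
  O1 : Type;
  O2 : Type;
  circ : O2 -> O2;
  E : term O1 O2 -> term O1 O2 -> Prop;
  W : O2 -> O2 -> word O2 }.

Definition algC (C : coi) := alg (O1 C) (O2 C).

Definition models (C : coi) (X : algC C) : Prop :=
  forall l r, @E C l r -> forall v : nat -> X, teval v l = teval v r.

Definition is_coi (C : coi) : Prop :=
  forall X : algC C, models X ->
  (forall x y z : X, add x (add y z) = add (add x y) z) /\
  (forall x : X, add (zero X) x = x) /\ (forall x : X, add x (zero X) = x) /\
  (forall x : X, add (opp x) x = zero X) /\ (forall x : X, add x (opp x) = zero X) /\
  (forall (o : O2 C) (x y : X), bin (@circ C o) x y = bin o y x) /\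
  (forall (o : O2 C) (x y z : X), bin o x (add y z) = add (bin o x y) (bin o x z)) /\
  (forall (w : O1 C) (x y : X), un w (add x y) = add (un w x) (un w y)) /\
  (forall (w : O1 C) (o : O2 C) (x y : X), bin o (un w x) y = un w (bin o x y)) /\
  (forall (o : O2 C) (x1 x2 x3 : X), add x1 (bin o x2 x3) = add (bin o x2 x3) x1) /\
  (forall (o ob : O2 C) (x1 x2 x3 : X),
     bin ob (bin o x1 x2) x3 =
     weval (zero X) opp add (atom_alg x1 x2 x3) (@W C o ob)).

Definition hom (C : coi) (X Y : algC C) (f : X -> Y) : Prop :=
  f (zero X) = zero Y /\
  (forall x, f (opp x) = opp (f x)) /\
  (forall x y, f (add x y) = add (f x) (f y)) /\
  (forall w x, f (un w x) = un w (f x)) /\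
  (forall o x y, f (bin o x y) = bin o (f x) (f y)).

Definition derived_action (C : coi) (A B : algC C) (dot : B -> A -> A)
  (star : O2 C -> B -> A -> A) : Prop :=
  models A /\ models B /\
  exists (Ex : algC C) (p : Ex -> B) (s : B -> Ex) (i : A -> Ex),
    models Ex /\ hom p /\ hom s /\ hom i /\
    (forall b, exists e, p e = b) /\
    (forall b, p (s b) = b) /\
    (forall a a', i a = i a' -> a = a') /\
    (forall e, p e = zero B <-> exists a, i a = e) /\
    (forall b a, i (dot b a) = add (add (s b) (i a)) (opp (s b))) /\
    (forall o b a, i (star o b a) = bin o (s b) (i a)).

(* Crossed modules in C (a*r is written  r *^o a, i.e. star (circ o) r a) *)
Definition crossed_module (C : coi) (C1 C0 : algC C) (d : C1 -> C0)
  (dot : C0 -> C1 -> C1) (star : O2 C -> C0 -> C1 -> C1) : Prop :=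
  hom d /\ derived_action dot star /\
  (forall r c, d (dot r c) = add (add r (d c)) (opp r)) /\
  (forall c c', dot (d c) c' = add (add c c') (opp c)) /\
  (forall o c c', star o (d c) c' = bin o c c') /\
  (forall o r c, d (star o r c) = bin o r (d c)) /\
  (forall o r c, d (star (@circ C o) r c) = bin o (d c) r).

Definition is_actor (C : coi) (A Act : algC C) (d : A -> Act)
  (dot : Act -> A -> A) (star : O2 C -> Act -> A -> A) : Prop :=
  models Act /\ crossed_module d dot star /\
  forall (X : algC C) (dotX : X -> A -> A) (starX : O2 C -> X -> A -> A),
    derived_action dotX starX ->
    exists! phi : X -> Act,
      hom phi /\ (forall c a, dotX c a = dot (phi c) a) /\
      (forall o c a, starX o c a = star o (phi c) a).

Lemma is_actor_derived (C : coi) (A Act : algC C) d dot star :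
  @is_actor C A Act d dot star -> derived_action dot star.
Proof. intros [_ [[_ [H _]] _]]. exact H. Qed.

(* The object B(A).  Families x of maps A -> A: a map a |-> x.a and maps
   a |-> x*a for every * in Omega_2'  (a*x := x *^o a).                *)
Section BA.
Variables (C : coi) (A : algC C).

Record fam : Type := Fam { fdot : A -> A; fstar : O2 C -> A -> A }.

(* The generators: an element b of some object B of C equipped with a
   derived action on A. *)
Record gen : Type := Gen {
  gB : algC C;
  gdot : gB -> A -> A;
  gstar : O2 C -> gB -> A -> A;
  gder : derived_action gdot gstar;
  gel : gB }.

Inductive bexpr : Type :=
| BGen  : gen -> bexpr
| BZero : bexpr
| BOpp  : bexpr -> bexpr
| BAdd  : bexpr -> bexpr -> bexpr
| BUn   : O1 C -> bexpr -> bexpr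
| BBin  : O2 C -> bexpr -> bexpr -> bexpr.

(* unary contexts: [u1; ...; un] stands for u1(u2(...un(_))),
   None = negation, Some w = the operation w in Omega_1' *)
Fixpoint apply_ctx (B : algC C) (c : list (option (O1 C))) (b : B) : B :=
  match c with
  | [] => b
  | None :: c' => opp (apply_ctx c' b)
  | Some w :: c' => un w (apply_ctx c' b)
  end.

Definition negs (c : list (option (O1 C))) : nat :=
  length (filter (fun u => match u with None => true | Some _ => false end) c).
Definition omegas (c : list (option (O1 C))) : list (option (O1 C)) :=
  filter (fun u => match u with None => false | Some _ => true end) c.

Definition gen_fam (g : gen) (c : list (option (O1 C))) : fam :=
  Fam (@gdot g (apply_ctx c (@gel g))) (fun o => @gstar g o (apply_ctx c (@gel g))).

Definition fam_zero : fam := Fam (fun a => a) (fun _ _ => zero A).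
Definition fam_sum (x y : fam) : fam :=
  Fam (fun a => fdot x (fdot y a)) (fun o a => add (fstar x o a) (fstar y o a)).
Definition fam_negp (x : fam) : fam :=
  Fam (fun a => a) (fun o a => opp (fstar x o a)).

Definition lact (x : fam) (o : O2 C) (a : A) : A := fstar x o a.
Definition ract (a : A) (o : O2 C) (x : fam) : A := fstar x (@circ C o) a.

Definition atom_fam (x y : fam) (a : A) (sh : shape) (o o' : O2 C) : A :=
  match sh with
  | S_1_23 => lact x o (lact y o' a)
  | S_1_32 => lact x o (ract a o' y)
  | S_23_1 => ract (lact y o' a) o x
  | S_32_1 => ract (ract a o' y) o x
  | S_2_13 => lact y o (lact x o' a)
  | S_2_31 => lact y o (ract a o' x)
  | S_13_2 => ract (lact x o' a) o y
  | S_31_2 => ract (ract a o' x) o y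
  end.

Definition fam_prod (o : O2 C) (x y : fam) : fam :=
  Fam (fun a => a)
      (fun ob a => weval (zero A) opp add (atom_fam x y a) (@W C o ob)).

(* The family of maps attached to c(e) for a unary context c, following the
   rules: omega and - are computed in B_j on generators; omega and - are
   additive (with -(x+y) = -y-x); omega(x*y) = omega(x)*y; products are
   negated by fam_negp. *)
Fixpoint fam_ctx (c : list (option (O1 C))) (e : bexpr) {struct e} : fam :=
  match e with
  | BGen g => gen_fam g c
  | BZero => fam_zero
  | BOpp e1 => fam_ctx (c ++ [None]) e1
  | BUn w e1 => fam_ctx (c ++ [Some w]) e1
  | BAdd e1 e2 =>
      if Nat.odd (negs c) then fam_sum (fam_ctx c e2) (fam_ctx c e1)
      else fam_sum (fam_ctx c e1) (fam_ctx c e2)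
  | BBin o e1 e2 =>
      Nat.iter (negs c) fam_negp (fam_prod o (fam_ctx (omegas c) e1) (fam_ctx [] e2))
  end.

Definition fam_of (e : bexpr) : fam := fam_ctx [] e.

(* The equivalence ~ defining B(A) = bexpr / ~ *)
Definition bsim (x y : bexpr) : Prop :=
  (forall a, fdot (fam_of x) a = fdot (fam_of y) a) /\
  (forall o a, fstar (fam_of x) o a = fstar (fam_of y) o a) /\
  (forall ws : list (O1 C), ws <> [] -> forall a,
     fdot (fam_ctx (map Some ws) x) a = fdot (fam_ctx (map Some ws) y) a).

End BA.

Arguments BZero {C A}.

Definition actor_to_B (C : coi) (A Act : algC C) (d : A -> Act)
  (dot : Act -> A -> A) (star : O2 C -> Act -> A -> A)
  (H : is_actor d dot star) (c : Act) : bexpr A :=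
  BGen (Gen (is_actor_derived H) c).

(* f : X -> B(A) induces an isomorphism of Omega-algebras X ~= B(A) = bexpr/~ :
   it is a homomorphism up to ~, injective modulo ~, and surjective onto the
   ~-classes. *)
Definition iso_onto_B (C : coi) (A X : algC C) (f : X -> bexpr A) : Prop :=
  bsim (f (zero X)) BZero /\
  (forall x, bsim (f (opp x)) (BOpp (f x))) /\
  (forall x y, bsim (f (add x y)) (BAdd (f x) (f y))) /\
  (forall w x, bsim (f (un w x)) (BUn w (f x))) /\
  (forall o x y, bsim (f (bin o x y)) (BBin o (f x) (f y))) /\
  (forall x y, bsim (f x) (f y) -> x = y) /\
  (forall e : bexpr A, exists x, bsim (f x) e).

(* Main.v *)
Require Import Defs.
From Stdlib Require Import List Bool Arith ProofIrrelevance FunctionalExtensionality.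
Import ListNotations.
Set Implicit Arguments.

Ltac laws HC X HX := destruct (HC X HX) as (Has & H0l & H0r & HNl & HNr & Hcirc & Hdist & Hunadd & Hunbin & Hax1 & Hax2).


Lemma g_assoc C (HC : is_coi C) (X : algC C) (HX : models X) (x y z : X) : add x (add y z) = add (add x y) z.
Proof. laws HC X HX. apply Has. Qed.
Lemma g_0l C (HC : is_coi C) (X : algC C) (HX : models X) (x : X) : add (zero X) x = x.
Proof. laws HC X HX. apply H0l. Qed.
Lemma g_0r C (HC : is_coi C) (X : algC C) (HX : models X) (x : X) : add x (zero X) = x.
Proof. laws HC X HX. apply H0r. Qed.
Lemma g_Nl C (HC : is_coi C) (X : algC C) (HX : models X) (x : X) : add (opp x) x = zero X.
Proof. laws HC X HX. apply HNl. Qed.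
Lemma g_Nr C (HC : is_coi C) (X : algC C) (HX : models X) (x : X) : add x (opp x) = zero X.
Proof. laws HC X HX. apply HNr. Qed.
Lemma b_circ C (HC : is_coi C) (X : algC C) (HX : models X) o (x y : X) : bin (circ o) x y = bin o y x.
Proof. laws HC X HX. apply Hcirc. Qed.
Lemma b_distr C (HC : is_coi C) (X : algC C) (HX : models X) o (x y z : X) : bin o x (add y z) = add (bin o x y) (bin o x z).
Proof. laws HC X HX. apply Hdist. Qed.
Lemma u_add C (HC : is_coi C) (X : algC C) (HX : models X) w (x y : X) : un w (add x y) = add (un w x) (un w y).
Proof. laws HC X HX. apply Hunadd. Qed.
Lemma u_bin C (HC : is_coi C) (X : algC C) (HX : models X) w o (x y : X) : bin o (un w x) y = un w (bin o x y).
Proof. laws HC X HX. apply Hunbin. Qed.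
Lemma ax1 C (HC : is_coi C) (X : algC C) (HX : models X) o (x1 x2 x3 : X) : add x1 (bin o x2 x3) = add (bin o x2 x3) x1.
Proof. laws HC X HX. apply Hax1. Qed.
Lemma ax2 C (HC : is_coi C) (X : algC C) (HX : models X) o ob (x1 x2 x3 : X) :
  bin ob (bin o x1 x2) x3 = weval (zero X) opp add (atom_alg x1 x2 x3) (@W C o ob).
Proof. laws HC X HX. apply Hax2. Qed.

Lemma g_cancel_l C (HC : is_coi C) (X : algC C) (HX : models X) (x y : X) : add (opp x) (add x y) = y.
Proof. rewrite (g_assoc HC HX), (g_Nl HC HX), (g_0l HC HX). reflexivity. Qed.
Lemma g_cancel_l' C (HC : is_coi C) (X : algC C) (HX : models X) (x y : X) : add x (add (opp x) y) = y.
Proof. rewrite (g_assoc HC HX), (g_Nr HC HX), (g_0l HC HX). reflexivity. Qed.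
Lemma g_inv_uniq C (HC : is_coi C) (X : algC C) (HX : models X) (x y : X) : add x y = zero X -> y = opp x.
Proof. intro H. rewrite <- (g_cancel_l HC HX x y), H, (g_0r HC HX). reflexivity. Qed.
Lemma g_opp0 C (HC : is_coi C) (X : algC C) (HX : models X) : opp (zero X) = zero X.
Proof. symmetry. apply (g_inv_uniq HC HX). apply (g_0r HC HX). Qed.
Lemma g_oppK C (HC : is_coi C) (X : algC C) (HX : models X) (x : X) : opp (opp x) = x.
Proof. symmetry. apply (g_inv_uniq HC HX). apply (g_Nl HC HX). Qed.
Lemma g_oppD C (HC : is_coi C) (X : algC C) (HX : models X) (x y : X) : opp (add x y) = add (opp y) (opp x).
Proof. symmetry. apply (g_inv_uniq HC HX).
  rewrite <- (g_assoc HC HX). rewrite (g_cancel_l' HC HX). apply (g_Nr HC HX). Qed.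
Lemma g_idem C (HC : is_coi C) (X : algC C) (HX : models X) (x : X) : add x x = x -> x = zero X.
Proof. intro H. rewrite <- (g_cancel_l HC HX x x), H. apply (g_Nl HC HX). Qed.
Lemma u_zero C (HC : is_coi C) (X : algC C) (HX : models X) w : un w (zero X) = zero X.
Proof. apply (g_idem HC HX). rewrite <- (u_add HC HX), (g_0l HC HX). reflexivity. Qed.
Lemma u_opp C (HC : is_coi C) (X : algC C) (HX : models X) w (x : X) : un w (opp x) = opp (un w x).
Proof. apply (g_inv_uniq HC HX). rewrite <- (u_add HC HX), (g_Nr HC HX). apply (u_zero HC HX). Qed.
Lemma b_0r C (HC : is_coi C) (X : algC C) (HX : models X) o (x : X) : bin o x (zero X) = zero X.
Proof. apply (g_idem HC HX). rewrite <- (b_distr HC HX), (g_0l HC HX). reflexivity. Qed.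
Lemma b_0l C (HC : is_coi C) (X : algC C) (HX : models X) o (x : X) : bin o (zero X) x = zero X.
Proof. rewrite <- (b_circ HC HX). apply (b_0r HC HX). Qed.
Lemma b_oppr C (HC : is_coi C) (X : algC C) (HX : models X) o (x y : X) : bin o x (opp y) = opp (bin o x y).
Proof. apply (g_inv_uniq HC HX). rewrite <- (b_distr HC HX), (g_Nr HC HX). apply (b_0r HC HX). Qed.
Lemma b_oppl C (HC : is_coi C) (X : algC C) (HX : models X) o (x y : X) : bin o (opp x) y = opp (bin o x y).
Proof. rewrite <- (b_circ HC HX), (b_oppr HC HX), (b_circ HC HX). reflexivity. Qed.
Lemma b_addl C (HC : is_coi C) (X : algC C) (HX : models X) o (x y z : X) : bin o (add x y) z = add (bin o x z) (bin o y z).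
Proof. rewrite <- (b_circ HC HX), (b_distr HC HX), !(b_circ HC HX). reflexivity. Qed.

Lemma weval_ext O2 X z op ad (g g' : shape -> O2 -> O2 -> X) w :
  (forall sh o o', g sh o o' = g' sh o o') -> weval z op ad g w = weval z op ad g' w.
Proof. intro H. induction w; simpl; congruence. Qed.

Lemma weval_hom C (X Y : algC C) (f : X -> Y) (Hf : hom f) (g : shape -> O2 C -> O2 C -> X) (w : word (O2 C)) :
  f (weval (zero X) opp add g w) = weval (zero Y) opp add (fun sh o o' => f (g sh o o')) w.
Proof. destruct Hf as (f0 & fopp & fadd & _). induction w; simpl; congruence. Qed.

Ltac dact H := destruct H as (HmA & HmB & Ex & p & s & i & HEx & Hp & Hs & Hi & Hsurj & Hps & Hinj & Hker & Hdot & Hstar);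
  destruct Hs as (s0 & sopp & sadd & sun & sbin); destruct Hi as (i0 & iopp & iadd & iun & ibin).

Lemma da_dot0 C (HC : is_coi C) (A B : algC C) dotB starB (H : @derived_action C A B dotB starB) a :
  dotB (zero B) a = a.
Proof. dact H. apply Hinj. rewrite Hdot, s0, (g_opp0 HC HEx), (g_0l HC HEx), (g_0r HC HEx). reflexivity. Qed.
Lemma da_star0 C (HC : is_coi C) (A B : algC C) dotB starB (H : @derived_action C A B dotB starB) o a :
  starB o (zero B) a = zero A.
Proof. dact H. apply Hinj. rewrite Hstar, s0, (b_0l HC HEx), i0. reflexivity. Qed.
Lemma da_star_a0 C (HC : is_coi C) (A B : algC C) dotB starB (H : @derived_action C A B dotB starB) o u :
  starB o u (zero A) = zero A.
Proof. dact H. apply Hinj. rewrite Hstar, i0, (b_0r HC HEx). reflexivity. Qed.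
Lemma da_dotD C (HC : is_coi C) (A B : algC C) dotB starB (H : @derived_action C A B dotB starB) u v a :
  dotB (add u v) a = dotB u (dotB v a).
Proof. dact H. apply Hinj. rewrite !Hdot, sadd, (g_oppD HC HEx).
  repeat rewrite <- (g_assoc HC HEx). reflexivity. Qed.
Lemma da_starD C (HC : is_coi C) (A B : algC C) dotB starB (H : @derived_action C A B dotB starB) o u v a :
  starB o (add u v) a = add (starB o u a) (starB o v a).
Proof. dact H. apply Hinj. rewrite iadd, !Hstar, sadd, (b_addl HC HEx). reflexivity. Qed.
Lemma da_dot_bin C (HC : is_coi C) (A B : algC C) dotB starB (H : @derived_action C A B dotB starB) o u v a :
  dotB (bin o u v) a = a.
Proof. dact H. apply Hinj. rewrite Hdot, sbin, <- (ax1 HC HEx), <- (g_assoc HC HEx), (g_Nr HC HEx), (g_0r HC HEx).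
  reflexivity. Qed.
Lemma da_star_opp C (HC : is_coi C) (A B : algC C) dotB starB (H : @derived_action C A B dotB starB) o u a :
  starB o (opp u) a = opp (starB o u a).
Proof. dact H. apply Hinj. rewrite iopp, !Hstar, sopp, (b_oppl HC HEx). reflexivity. Qed.
Lemma da_star_un C (HC : is_coi C) (A B : algC C) dotB starB (H : @derived_action C A B dotB starB) o w u a :
  starB o (un w u) a = un w (starB o u a).
Proof. dact H. apply Hinj. rewrite iun, !Hstar, sun, (u_bin HC HEx). reflexivity. Qed.
Lemma da_dot_inv C (HC : is_coi C) (A B : algC C) dotB starB (H : @derived_action C A B dotB starB) v a :
  dotB v (dotB (opp v) a) = a.
Proof. dact H. apply Hinj. rewrite !Hdot, sopp, (g_oppK HC HEx).
  repeat rewrite <- (g_assoc HC HEx). rewrite (g_cancel_l' HC HEx), (g_Nr HC HEx), (g_0r HC HEx). reflexivity. Qed.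
Lemma da_star_bin C (HC : is_coi C) (A B : algC C) dotB starB (H : @derived_action C A B dotB starB) o ob u v a :
  starB ob (bin o u v) a =
  weval (zero A) opp add (atom_fam (Fam (dotB u) (fun o => starB o u)) (Fam (dotB v) (fun o => starB o v)) a) (@W C o ob).
Proof. pose proof H as H'. dact H. apply Hinj.
  assert (Hih : hom i) by (repeat split; assumption).
  rewrite (weval_hom Hih), Hstar, sbin, (ax2 HC HEx). apply weval_ext.
  intros sh o1 o2; destruct sh; unfold atom_fam, atom_alg, lact, ract; simpl;
  rewrite ?Hstar, ?(b_circ HC HEx); reflexivity. Qed.

Lemma apply_ctx_app C (X : algC C) c c' (b : X) : apply_ctx (c ++ c') b = apply_ctx c (apply_ctx c' b).
Proof. induction c as [|[w|] c IH]; simpl; rewrite ?IH; reflexivity. Qed.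
Lemma apply_ctx_zero C (HC : is_coi C) (X : algC C) (HX : models X) c : apply_ctx c (zero X) = zero X.
Proof. induction c as [|[w|] c IH]; simpl; rewrite ?IH; rewrite ?(u_zero HC HX), ?(g_opp0 HC HX); reflexivity. Qed.
Lemma negs_None C (c : list (option (O1 C))) : negs (None :: c) = S (negs c).
Proof. reflexivity. Qed.
Lemma negs_Some C (c : list (option (O1 C))) w : negs (Some w :: c) = negs c.
Proof. reflexivity. Qed.
Lemma apply_ctx_add C (HC : is_coi C) (X : algC C) (HX : models X) c (x y : X) :
  apply_ctx c (add x y) = if Nat.odd (negs c) then add (apply_ctx c y) (apply_ctx c x) else add (apply_ctx c x) (apply_ctx c y).
Proof. induction c as [|[w|] c IH].
  - reflexivity.
  - rewrite negs_Some. simpl. rewrite IH. destruct (Nat.odd (negs c)); apply (u_add HC HX).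
  - rewrite negs_None, Nat.odd_succ, <- Nat.negb_odd. simpl. rewrite IH.
    destruct (Nat.odd (negs c)); simpl; apply (g_oppD HC HX).
Qed.
Lemma apply_somes_add C (HC : is_coi C) (X : algC C) (HX : models X) ws (x y : X) :
  apply_ctx (map Some ws) (add x y) = add (apply_ctx (map Some ws) x) (apply_ctx (map Some ws) y).
Proof. induction ws as [|w ws IH]; simpl; rewrite ?IH, ?(u_add HC HX); reflexivity. Qed.
Lemma apply_somes_opp C (HC : is_coi C) (X : algC C) (HX : models X) ws (x : X) :
  apply_ctx (map Some ws) (opp x) = opp (apply_ctx (map Some ws) x).
Proof. induction ws as [|w ws IH]; simpl; rewrite ?IH, ?(u_opp HC HX); reflexivity. Qed.
Lemma iter_opp_un C (HC : is_coi C) (X : algC C) (HX : models X) n w (x : X) :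
  un w (Nat.iter n opp x) = Nat.iter n opp (un w x).
Proof. induction n as [|n IH]; simpl; rewrite ?(u_opp HC HX), ?IH; reflexivity. Qed.
Lemma apply_ctx_bin C (HC : is_coi C) (X : algC C) (HX : models X) c o (x y : X) :
  apply_ctx c (bin o x y) = bin o (Nat.iter (negs c) opp (apply_ctx (omegas c) x)) y.
Proof. induction c as [|[w|] c IH].
  - reflexivity.
  - rewrite negs_Some. simpl. rewrite IH, <- (u_bin HC HX), (iter_opp_un HC HX). reflexivity.
  - rewrite negs_None. simpl. rewrite IH, (b_oppl HC HX). reflexivity.
Qed.
Lemma bin_iter_opp C (HC : is_coi C) (X : algC C) (HX : models X) n o (x y : X) :
  bin o (Nat.iter n opp x) y = Nat.iter n opp (bin o x y).
Proof. induction n as [|n IH]; simpl; rewrite ?(b_oppl HC HX), ?IH; reflexivity. Qed.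
Lemma hom_apply_ctx C (X Y : algC C) (f : X -> Y) (Hf : hom f) c b : f (apply_ctx c b) = apply_ctx c (f b).
Proof. destruct Hf as (f0 & fopp & fadd & fun_ & fbin).
  induction c as [|[w|] c IH]; simpl; rewrite ?fopp, ?fun_, ?IH; reflexivity. Qed.
Lemma da_star_iter C (HC : is_coi C) (A B : algC C) dotB starB (H : @derived_action C A B dotB starB) n o z a :
  starB o (Nat.iter n opp z) a = Nat.iter n opp (starB o z a).
Proof. induction n as [|n IH]; simpl; rewrite ?(da_star_opp HC H), ?IH; reflexivity. Qed.
Lemma negp_dot C (A : algC C) n (F : fam A) a : (forall a, fdot F a = a) -> fdot (Nat.iter n (@fam_negp C A) F) a = a.
Proof. intro H. destruct n; simpl; auto. Qed.
Lemma negp_star C (A : algC C) n (F : fam A) o a : fstar (Nat.iter n (@fam_negp C A) F) o a = Nat.iter n opp (fstar F o a).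
Proof. induction n as [|n IH]; simpl; rewrite ?IH; reflexivity. Qed.
Lemma atom_fam_ext C (A : algC C) (x y x' y' : fam A) a sh o o' :
  (forall o a, fstar x o a = fstar x' o a) -> (forall o a, fstar y o a = fstar y' o a) ->
  atom_fam x y a sh o o' = atom_fam x' y' a sh o o'.
Proof. intros Hx Hy. destruct sh; unfold atom_fam, lact, ract; rewrite ?Hx, ?Hy, ?Hx; reflexivity. Qed.

Definition Rel C (A Act : algC C) (dot : Act -> A -> A) (star : O2 C -> Act -> A -> A) (x : Act) (e : bexpr A) : Prop :=
  forall c, (forall a, fdot (fam_ctx c e) a = dot (apply_ctx c x) a) /\
            (forall o a, fstar (fam_ctx c e) o a = star o (apply_ctx c x) a).
Arguments Rel {C A Act} dot star x e.

Lemma R_zero C (HC : is_coi C) (A Act : algC C) (HAct : models Act) dot star (H : @derived_action C A Act dot star) :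
  Rel dot star (zero Act) BZero.
Proof. intro c. simpl. rewrite (apply_ctx_zero HC HAct). split; intros; simpl.
  - rewrite (da_dot0 HC H). reflexivity.
  - rewrite (da_star0 HC H). reflexivity. Qed.
Lemma R_opp C (A Act : algC C) dot star x e : @Rel C A Act dot star x e -> Rel dot star (opp x) (BOpp e).
Proof. intros HR c. simpl. destruct (HR (c ++ [None])) as [H1 H2]. rewrite apply_ctx_app in H1, H2. simpl in H1, H2. auto. Qed.
Lemma R_un C (A Act : algC C) dot star w x e : @Rel C A Act dot star x e -> Rel dot star (un w x) (BUn w e).
Proof. intros HR c. simpl. destruct (HR (c ++ [Some w])) as [H1 H2]. rewrite apply_ctx_app in H1, H2. simpl in H1, H2. auto. Qed.
Lemma R_add C (HC : is_coi C) (A Act : algC C) (HAct : models Act) dot star (H : @derived_action C A Act dot star) x1 x2 e1 e2 :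
  Rel dot star x1 e1 -> Rel dot star x2 e2 -> Rel dot star (add x1 x2) (BAdd e1 e2).
Proof. intros R1 R2 c. simpl. rewrite (apply_ctx_add HC HAct).
  destruct (R1 c) as [A1 B1]; destruct (R2 c) as [A2 B2].
  destruct (Nat.odd (negs c)); split; intros; simpl;
  rewrite ?(da_dotD HC H), ?(da_starD HC H), ?A1, ?A2, ?B1, ?B2; reflexivity. Qed.
Lemma R_bin C (HC : is_coi C) (A Act : algC C) (HAct : models Act) dot star (H : @derived_action C A Act dot star) o x1 x2 e1 e2 :
  Rel dot star x1 e1 -> Rel dot star x2 e2 -> Rel dot star (bin o x1 x2) (BBin o e1 e2).
Proof. intros R1 R2 c. simpl. rewrite (apply_ctx_bin HC HAct).
  destruct (R1 (omegas c)) as [A1 B1]; destruct (R2 []) as [A2 B2]. simpl in A2, B2.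
  split; intros.
  - rewrite (da_dot_bin HC H). apply negp_dot. reflexivity.
  - rewrite negp_star. simpl.
    rewrite (bin_iter_opp HC HAct), (da_star_iter HC H). f_equal.
    rewrite (da_star_bin HC H). apply weval_ext. intros. apply atom_fam_ext; simpl; auto.
Qed.

Lemma R_gen C (A Act : algC C) d dot star (Hact : @is_actor C A Act d dot star) (g : gen A) :
  exists x, Rel dot star x (BGen g).
Proof. destruct g as [B dB sB HB b]. destruct Hact as (_ & _ & U).
  destruct (U B dB sB HB) as [phi [[Hphi [Hd Hs]] _]]. exists (phi b). intro c. simpl.
  rewrite <- (hom_apply_ctx Hphi). split; intros; simpl; auto. Qed.

Lemma surjR C (HC : is_coi C) (A Act : algC C) d dot star (Hact : @is_actor C A Act d dot star) (e : bexpr A) :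
  exists x, Rel dot star x e.
Proof. pose proof (is_actor_derived Hact) as HD. pose proof (proj1 Hact) as HAct.
  induction e as [g| |e [x IH]|e1 [x1 IH1] e2 [x2 IH2]|w e [x IH]|o e1 [x1 IH1] e2 [x2 IH2]].
  - apply (R_gen Hact).
  - exists (zero Act). apply (R_zero HC HAct HD).
  - exists (opp x). apply R_opp; auto.
  - exists (add x1 x2). apply (R_add HC HAct HD); auto.
  - exists (un w x). apply R_un; auto.
  - exists (bin o x1 x2). apply (R_bin HC HAct HD); auto.
Qed.

Definition Pk C (A Act : algC C) (dot : Act -> A -> A) (star : O2 C -> Act -> A -> A) (k : Act) : Prop :=
  (forall ws a, dot (apply_ctx (map Some ws) k) a = a) /\ (forall o a, star o k a = zero A).
Arguments Pk {C A Act} dot star k.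

Lemma weval_zero C (HC : is_coi C) (X : algC C) (HX : models X) (w : word (O2 C)) :
  weval (zero X) opp add (fun _ _ _ => zero X) w = zero X.
Proof. induction w; simpl; rewrite ?IHw, ?IHw1, ?IHw2, ?(g_opp0 HC HX), ?(g_0l HC HX); reflexivity. Qed.


Lemma Pk_zero C (HC : is_coi C) (A Act : algC C) (HAct : models Act) dot star (H : @derived_action C A Act dot star) :
  Pk dot star (zero Act).
Proof. split; intros.
  - rewrite (apply_ctx_zero HC HAct). apply (da_dot0 HC H).
  - apply (da_star0 HC H). Qed.
Lemma Pk_opp C (HC : is_coi C) (A Act : algC C) (HAct : models Act) dot star (H : @derived_action C A Act dot star) k :
  Pk dot star k -> Pk dot star (opp k).
Proof. intros [H1 H2]. split; intros.
  - rewrite (apply_somes_opp HC HAct).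
    transitivity (dot (apply_ctx (map Some ws) k) (dot (opp (apply_ctx (map Some ws) k)) a)).
    + symmetry. apply H1.
    + apply (da_dot_inv HC H).
  - rewrite (da_star_opp HC H), H2. apply (g_opp0 HC (proj1 H)). Qed.
Lemma Pk_add C (HC : is_coi C) (A Act : algC C) (HAct : models Act) dot star (H : @derived_action C A Act dot star) k l :
  Pk dot star k -> Pk dot star l -> Pk dot star (add k l).
Proof. intros [H1 H2] [H3 H4]. split; intros.
  - rewrite (apply_somes_add HC HAct), (da_dotD HC H), H3, H1. reflexivity.
  - rewrite (da_starD HC H), H2, H4. apply (g_0l HC (proj1 H)). Qed.
Lemma Pk_un C (HC : is_coi C) (A Act : algC C) (HAct : models Act) dot star (H : @derived_action C A Act dot star) w k :
  Pk dot star k -> Pk dot star (un w k).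
Proof. intros [H1 H2]. split; intros.
  - specialize (H1 (ws ++ [w]) a). rewrite map_app, apply_ctx_app in H1. exact H1.
  - rewrite (da_star_un HC H), H2. apply (u_zero HC (proj1 H)). Qed.
Lemma Pk_bin C (HC : is_coi C) (A Act : algC C) (HAct : models Act) dot star (H : @derived_action C A Act dot star) o k z :
  Pk dot star k -> Pk dot star (bin o k z).
Proof. intros [H1 H2]. split; intros.
  - rewrite (apply_ctx_bin HC HAct). apply (da_dot_bin HC H).
  - rewrite (da_star_bin HC H).
    transitivity (weval (zero A) opp add (fun _ _ _ => zero A) (@W C o o0)); [|apply (weval_zero HC (proj1 H))].
    apply weval_ext. intros sh o1 o2. destruct sh; unfold atom_fam, lact, ract; simpl;
    rewrite ?H2, ?(da_star_a0 HC H), ?H2; reflexivity. Qed.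

Definition Kalg C (HC : is_coi C) (A Act : algC C) (HAct : models Act) dot star (H : @derived_action C A Act dot star) : algC C :=
  @Alg (O1 C) (O2 C) {k : Act | Pk dot star k}
    (exist _ (zero Act) (Pk_zero HC HAct H))
    (fun x => exist _ _ (Pk_opp HC HAct H (proj2_sig x)))
    (fun x y => exist _ _ (Pk_add HC HAct H (proj2_sig x) (proj2_sig y)))
    (fun w x => exist _ _ (Pk_un HC HAct H w (proj2_sig x)))
    (fun o x y => exist _ _ (Pk_bin HC HAct H o (proj1_sig y) (proj2_sig x))).

Lemma sig_ext (T : Type) (P : T -> Prop) (x y : {t | P t}) : proj1_sig x = proj1_sig y -> x = y.
Proof. destruct x as [x px], y as [y py]. simpl. intros ->. f_equal. apply proof_irrelevance. Qed.

Lemma Kalg_models C (HC : is_coi C) (A Act : algC C) (HAct : models Act) dot star (H : @derived_action C A Act dot star) :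
  models (Kalg HC HAct H).
Proof.
  assert (TP : forall (v : nat -> Kalg HC HAct H) t, proj1_sig (teval v t) = teval (fun n => proj1_sig (v n)) t).
  { intros v t. induction t; simpl; congruence. }
  intros l r HE v. apply sig_ext. rewrite !TP. apply HAct. exact HE. Qed.

Definition Prod C (A K : algC C) : algC C :=
  @Alg (O1 C) (O2 C) (A * K)%type (zero A, zero K)
   (fun x => (opp (fst x), opp (snd x)))
   (fun x y => (add (fst x) (fst y), add (snd x) (snd y)))
   (fun w x => (un w (fst x), un w (snd x)))
   (fun o x y => (bin o (fst x) (fst y), bin o (snd x) (snd y))).

Lemma Prod_models C (A K : algC C) (HA : models A) (HK : models K) : models (Prod A K).
Proof.
  assert (T1 : forall (v : nat -> Prod A K) t, fst (teval v t) = teval (fun n => fst (v n)) t).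
  { intros v t. induction t; simpl; congruence. }
  assert (T2 : forall (v : nat -> Prod A K) t, snd (teval v t) = teval (fun n => snd (v n)) t).
  { intros v t. induction t; simpl; congruence. }
  intros l r HE v. apply injective_projections; rewrite ?T1, ?T2; [apply HA | apply HK]; exact HE. Qed.

Lemma triv_da C (HC : is_coi C) (A K : algC C) (HA : models A) (HK : models K) :
  @derived_action C A K (fun _ a => a) (fun _ _ _ => zero A).
Proof. split; [exact HA|]. split; [exact HK|].
  exists (Prod A K), snd, (fun k => (zero A, k)), (fun a => (a, zero K)).
  split; [apply Prod_models; auto|].
  split; [unfold hom; repeat split; reflexivity|].
  split; [unfold hom; repeat split; intros; simpl;
     rewrite ?(g_opp0 HC HA), ?(g_0l HC HA), ?(u_zero HC HA), ?(b_0l HC HA); reflexivity|].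
  split; [unfold hom; repeat split; intros; simpl;
     rewrite ?(g_opp0 HC HK), ?(g_0l HC HK), ?(u_zero HC HK), ?(b_0l HC HK); reflexivity|].
  split; [intro b; exists (zero A, b); reflexivity|].
  split; [intro b; reflexivity|].
  split; [intros a a' E; injection E; auto|].
  split; [intros [a k]; simpl; split; [intros ->; exists a; reflexivity | intros [a' E]; injection E; auto]|].
  split; [intros b a; simpl; f_equal;
     rewrite ?(g_0l HC HA), ?(g_opp0 HC HA), ?(g_0r HC HA), ?(g_0r HC HK), ?(g_Nr HC HK); reflexivity|].
  intros o b a; simpl; f_equal; rewrite ?(b_0l HC HA), ?(b_0r HC HK); reflexivity.
Qed.

Lemma faithful C (HC : is_coi C) (A Act : algC C) (HA : models A) d dot star (Hact : @is_actor C A Act d dot star) k :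
  Pk dot star k -> k = zero Act.
Proof. intro Pkk. pose proof (is_actor_derived Hact) as HD. pose proof (proj1 Hact) as HAct.
  pose (K := Kalg HC HAct HD).
  pose proof (triv_da HC HA (@Kalg_models C HC A Act HAct dot star HD)) as HT.
  destruct Hact as (_ & _ & U).
  destruct (U K _ _ HT) as [phi [_ Huniq]].
  assert (E1 : phi = (fun x : K => proj1_sig x)).
  { apply Huniq. split; [unfold hom; repeat split; reflexivity|]. split.
    - intros [c [P1 P2]] a. simpl. symmetry. apply (P1 [] a).
    - intros o [c [P1 P2]] a. simpl. symmetry. apply P2. }
  assert (E2 : phi = (fun _ : K => zero Act)).
  { apply Huniq. split.
    - unfold hom; repeat split; intros; simpl;
      rewrite ?(g_opp0 HC HAct), ?(g_0l HC HAct), ?(u_zero HC HAct), ?(b_0l HC HAct); reflexivity.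
    - split; intros; simpl.
      + symmetry. apply (da_dot0 HC HD).
      + symmetry. apply (da_star0 HC HD). }
  rewrite E1 in E2. exact (f_equal (fun f => f (exist _ k Pkk : K)) E2).
Qed.

Theorem proposition3p5 (C : coi) (HC : is_coi C) (A : algC C) (HA : models A)
  (Act : algC C) (d : A -> Act) (dot : Act -> A -> A) (star : O2 C -> Act -> A -> A)
  (Hact : is_actor d dot star) :
  iso_onto_B (actor_to_B Hact).
Proof.
  pose proof (is_actor_derived Hact) as HD. pose proof (proj1 Hact) as HAct.
  assert (Rf : forall x, Rel dot star x (actor_to_B Hact x)).
  { intros x c. split; intros; reflexivity. }
  assert (BR : forall x e, Rel dot star x e -> bsim (actor_to_B Hact x) e).
  { intros x e HR. split; [|split].
    - intros a. unfold fam_of. rewrite (proj1 (HR []) a). reflexivity.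
    - intros o a. unfold fam_of. rewrite (proj2 (HR []) o a). reflexivity.
    - intros ws _ a. rewrite (proj1 (HR (map Some ws)) a). reflexivity. }
  split; [apply BR, (R_zero HC HAct HD)|].
  split; [intro x; apply BR, R_opp, Rf|].
  split; [intros x y; apply BR, (R_add HC HAct HD); apply Rf|].
  split; [intros w x; apply BR, R_un, Rf|].
  split; [intros o x y; apply BR, (R_bin HC HAct HD); apply Rf|].
  split.
  - intros x y [B1 [B2 B3]].
    assert (Pxy : Pk dot star (add x (opp y))).
    { split.
      - intros ws a. rewrite (apply_somes_add HC HAct), (apply_somes_opp HC HAct), (da_dotD HC HD).
        assert (E : forall a, dot (apply_ctx (map Some ws) x) a = dot (apply_ctx (map Some ws) y) a).
        { destruct ws as [|w ws]. - exact B1. - apply (B3 (w :: ws)). discriminate. }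
        rewrite E. apply (da_dot_inv HC HD).
      - intros o a. rewrite (da_starD HC HD), (da_star_opp HC HD).
        assert (E : star o x a = star o y a) by exact (B2 o a).
        rewrite E. apply (g_Nr HC HA). }
    pose proof (faithful HC HA Hact Pxy) as E.
    rewrite <- (g_0r HC HAct x), <- (g_Nl HC HAct y), (g_assoc HC HAct), E, (g_0l HC HAct). reflexivity.
  - intro e. destruct (surjR HC Hact e) as [x Hx]. exists x. apply BR, Hx.
Qed.
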